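(* Let $\lambda\in W(k)$ be a Teichmüller element and let $S=\sum_{\ell\ge0}b_\ell(t-\lambda)^\ell$ with $b_\ell\in K$. Suppose there are real numbers $\alpha\ge0$ and $\beta$ such that $v_p(b_\ell)\ge-(\alpha\log_p\ell+\beta)$ for all $\ell\ge1$. Write $$F(S)=\sum_{\ell\ge0}\sigma(b_\ell)\,(t^p-\sigma(\lambda))^\ell=\sum_{\ell\ge0}a_\ell(t-\lambda)^\ell$$ (as formal power series in $t-\lambda$). Then $v_p(a_\ell)\ge-(\alpha\log_p\ell+\beta)$ for all $\ell\ge1$.
   Context: Let $p$ be an odd prime, $k$ a finite field of characteristic $p$, $W(k)$ its ring of Witt vectors, $K$ its fraction field, $v_p$ the $p$-adic valuation on $K$, $\sigma$ the Frobenius automorphism of $K$, and $\log_p$ the real logarithm to base $p$. A Teichmüller element $\lambda\in W(k)$ satisfies $\sigma(\lambda)=\lambda^p$. Here $t^p-\sigma(\lambda)=(\lambda+(t-\lambda))^p-\lambda^p$ is expanded as a polynomial in $t-\lambda$ with zero constant term, so the sum defining $F(S)$ is a well-defined formal power series in $t-\lambda$. *)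

(* Defs.v *)
From Stdlib Require Import ZArith Reals.
From HB Require Import structures.
From mathcomp Require Import all_boot all_algebra.

Set Implicit Arguments.
Unset Strict Implicit.
Unset Printing Implicit Defensive.

Import GRing.Theory.

(* Abstract axiomatisation of the setting K = W(k)[1/p] with its p-adic
   valuation v_p and the Witt-vector Frobenius sigma.
   The valuation is given on nonzero elements; v_p(0) = +oo is encoded by
   treating the element 0 separately in every valuation inequality. *)

Definition p_adic_valuation (K : fieldType) (p : nat) (v : K -> Z) : Prop :=
  [/\ forall x y : K, (x != 0)%R -> (y != 0)%R -> v (x * y)%R = Z.add (v x) (v y),
      forall x y : K, (x != 0)%R -> (y != 0)%R -> (x + y != 0)%R ->
        Z.le (Z.min (v x) (v y)) (v (x + y)%R),
      ((p%:R : K) != 0)%R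
    & v (p%:R : K)%R = Z.one].

(* x lies in the valuation ring (i.e. x in W(k)): v_p(x) >= 0. *)
Definition integral (K : fieldType) (v : K -> Z) (x : K) : Prop :=
  x = 0%R \/ Z.le Z.zero (v x).

Definition frobenius_lift (K : fieldType) (p : nat) (v : K -> Z)
    (sigma : {rmorphism K -> K}) : Prop :=
  [/\ bijective sigma,
      forall x : K, (x != 0)%R -> v (sigma x) = v x
    & forall x : K, integral v x ->
        (sigma x - x ^+ p)%R = 0%R \/ Z.le Z.one (v (sigma x - x ^+ p)%R)].

Definition teichmuller (K : fieldType) (p : nat) (v : K -> Z)
    (sigma : {rmorphism K -> K}) (lambda : K) : Prop :=
  integral v lambda /\ sigma lambda = (lambda ^+ p)%R.

Definition vge (K : fieldType) (v : K -> Z) (x : K) (r : R) : Prop :=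
  x = 0%R \/ Rle r (IZR (v x)).

Definition log_p (p : nat) (x : R) : R := Rdiv (ln x) (ln (INR p)).

Definition lbound (p : nat) (alpha beta : R) (l : nat) : R :=
  Ropp (Rplus (Rmult alpha (log_p p (INR l))) beta).

(* The polynomial t^p - sigma(lambda), written in the variable u = t - lambda:
   (lambda + u)^p - sigma(lambda). *)
Definition tp_minus (K : fieldType) (sigma : {rmorphism K -> K}) (p : nat)
    (lambda : K) : {poly K} :=
  (('X + lambda%:P) ^+ p - (sigma lambda)%:P)%R.

(* Coefficient of (t - lambda)^n in F(S) = sum_l sigma(b_l)(t^p - sigma(lambda))^l.
   Since t^p - sigma(lambda) has zero constant term in t - lambda, only the
   terms with l <= n contribute to the coefficient of (t - lambda)^n. *)
Definition F_coef (K : fieldType) (sigma : {rmorphism K -> K}) (p : nat)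
    (lambda : K) (b : nat -> K) (n : nat) : K :=
  (\sum_(l < n.+1) sigma (b l) * ((tp_minus sigma p lambda) ^+ l)`_n)%R.

(* Main.v *)
Require Import Defs.
From Stdlib Require Import ZArith Reals Lia Lra.
From HB Require Import structures.
From mathcomp Require Import all_boot all_algebra.

Import GRing.Theory.

Lemma lbound_mono (p : nat) (alpha beta : R) (j l : nat) :
  prime p -> Rle 0 alpha -> (1 <= j)%N -> (j <= l)%N ->
  Rle (lbound p alpha beta l) (lbound p alpha beta j).
Proof.
move=> pp ha hj hjl.
have p2 : (2 <= p)%N by apply: prime_gt1.
have hp : Rlt 1 (INR p).
  have := le_INR 2 p (ssrnat.leP p2). simpl. lra.
have lnp : Rlt 0 (ln (INR p)) by rewrite -ln_1; apply: ln_increasing; lra.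
have hj' : Rle 1 (INR j) by have := le_INR 1 j (ssrnat.leP hj); simpl; lra.
have hjl' : Rle (INR j) (INR l) by apply: le_INR; apply/ssrnat.leP.
have hl : Rle (ln (INR j)) (ln (INR l)).
  case: (Rle_lt_or_eq_dec _ _ hjl') => h.
    by apply: Rlt_le; apply: ln_increasing; lra.
  by rewrite h; lra.
rewrite /lbound /log_p /Rdiv.
have hi : Rle 0 (/ ln (INR p)) by apply: Rlt_le; apply: Rinv_0_lt_compat.
have := Rmult_le_compat_r _ _ _ hi hl => h1.
have := Rmult_le_compat_l _ _ _ ha h1 => h2.
lra.
Qed.

Set Implicit Arguments.
Section Val.
Variables (K : fieldType) (p : nat) (v : K -> Z).
Hypothesis hv : p_adic_valuation p v.

Lemma vge_add r x y : vge v x r -> vge v y r -> vge v (x + y)%R r.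
Proof.
case: hv => _ hadd _ _.
rewrite /vge => [[->|hx] [->|hy]]; rewrite ?add0r ?addr0; [by left|by right|by right|].
case: (boolP (x + y == 0)%R) => [/eqP|]; first by left.
move=> hxy; right.
case: (boolP (x == 0)%R) => [/eqP e|hx0]; first by rewrite e add0r.
case: (boolP (y == 0)%R) => [/eqP e|hy0]; first by rewrite e addr0.
have := hadd x y hx0 hy0 hxy => /IZR_le h.
by case: (Z.min_dec (v x) (v y)) => e; rewrite e in h; lra.
Qed.

Lemma vge_mul r x c : vge v x r -> integral v c -> vge v (x * c)%R r.
Proof.
case: hv => hmul _ _ _.
rewrite /vge /integral => [[->|hx] [->|hc]]; rewrite ?mul0r ?mulr0; try by left.
case: (boolP (x == 0)%R) => [/eqP ->|hx0]; first by rewrite mul0r; left.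
case: (boolP (c == 0)%R) => [/eqP ->|hc0]; first by rewrite mulr0; left.
right; rewrite hmul // plus_IZR.
have := IZR_le _ _ hc; lra.
Qed.

Lemma integral_add x y : integral v x -> integral v y -> integral v (x + y)%R.
Proof.
case: hv => _ hadd _ _.
rewrite /integral => [[->|hx] [->|hy]]; rewrite ?add0r ?addr0; [by left|by right|by right|].
case: (boolP (x + y == 0)%R) => [/eqP|]; first by left.
move=> hxy; right.
case: (boolP (x == 0)%R) => [/eqP e|hx0]; first by rewrite e add0r.
case: (boolP (y == 0)%R) => [/eqP e|hy0]; first by rewrite e addr0.
have := hadd x y hx0 hy0 hxy; (unfold Z.zero in *; lia).
Qed.

Lemma integral_mul x y : integral v x -> integral v y -> integral v (x * y)%R.
Proof.
case: hv => hmul _ _ _.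
rewrite /integral => [[->|hx] [->|hy]]; rewrite ?mul0r ?mulr0; try by left.
case: (boolP (x == 0)%R) => [/eqP ->|hx0]; first by rewrite mul0r; left.
case: (boolP (y == 0)%R) => [/eqP ->|hy0]; first by rewrite mulr0; left.
right; rewrite hmul //; (unfold Z.zero in *; lia).
Qed.

Lemma integral0 : integral v 0%R. Proof. by left. Qed.

Lemma v1 : v 1%R = Z0.
Proof.
case: hv => hmul _ _ _.
have := hmul 1%R 1%R (oner_neq0 _) (oner_neq0 _); rewrite mulr1; (unfold Z.zero in *; lia).
Qed.

Lemma integral1 : integral v 1%R. Proof. right; rewrite v1; (unfold Z.zero in *; lia). Qed.

Lemma integralN x : integral v x -> integral v (- x)%R.
Proof.
case: hv => hmul _ _ _.
have hm1 : v (-1)%R = Z0.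
  have h1 : ((-1 : K) != 0)%R by rewrite oppr_eq0 oner_neq0.
  have := hmul (-1)%R (-1)%R h1 h1; rewrite mulrNN mulr1 v1; (unfold Z.zero in *; lia).
rewrite /integral => [[->|hx]]; first by rewrite oppr0; left.
case: (boolP (x == 0)%R) => [/eqP ->|hx0]; first by rewrite oppr0; left.
right; rewrite -mulN1r hmul ?oppr_eq0 ?oner_neq0 // hm1; (unfold Z.zero in *; lia).
Qed.

Lemma integral_sum (I : Type) (r : seq I) (P : pred I) (F : I -> K) :
  (forall i, P i -> integral v (F i)) -> integral v (\sum_(i <- r | P i) F i)%R.
Proof. move=> h; apply: big_ind => //; [exact: integral0 | exact: integral_add]. Qed.

Definition ipoly (q : {poly K}) := forall i, integral v q`_i.

Lemma ipolyD q r : ipoly q -> ipoly r -> ipoly (q + r)%R.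
Proof. by move=> hq hr i; rewrite coefD; apply: integral_add. Qed.

Lemma ipolyN q : ipoly q -> ipoly (- q)%R.
Proof. by move=> hq i; rewrite coefN; apply: integralN. Qed.

Lemma ipolyM q r : ipoly q -> ipoly r -> ipoly (q * r)%R.
Proof.
move=> hq hr i; rewrite coefM; apply: integral_sum => j _; exact: integral_mul.
Qed.

Lemma ipolyC c : integral v c -> ipoly c%:P.
Proof. by move=> hc i; rewrite coefC; case: (i == 0)%N => //; apply: integral0. Qed.

Lemma ipoly1 : ipoly 1%R.
Proof. by move=> i; rewrite coef1; case: (i == 0)%N; [apply: integral1|apply: integral0]. Qed.

Lemma ipolyX : ipoly 'X.
Proof. by move=> i; rewrite coefX; case: (i == 1)%N; [apply: integral1|apply: integral0]. Qed.

Lemma ipolyXn q n : ipoly q -> ipoly (q ^+ n)%R.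
Proof.
move=> hq; elim: n => [|n IH]; first by rewrite expr0; apply: ipoly1.
by rewrite exprS; apply: ipolyM.
Qed.

Lemma integralXn x n : integral v x -> integral v (x ^+ n)%R.
Proof.
move=> hx; elim: n => [|n IH]; first by rewrite expr0; apply: integral1.
by rewrite exprS; apply: integral_mul.
Qed.

End Val.
Unset Implicit Arguments.


Theorem mainTheorem7 (K : fieldType) (p : nat) (v : K -> Z)
    (sigma : {rmorphism K -> K}) (lambda : K) (b : nat -> K) (alpha beta : R) :
  prime p -> odd p ->
  p_adic_valuation p v ->
  frobenius_lift p v sigma ->
  teichmuller p v sigma lambda ->
  Rle 0 alpha ->
  (forall l : nat, (1 <= l)%N -> vge v (b l) (lbound p alpha beta l)) ->
  forall l : nat, (1 <= l)%N ->
    vge v (F_coef sigma p lambda b l) (lbound p alpha beta l).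
Proof.
move=> pp _ hv [_ hsig _] [hlam hsl] ha hb l hl.
have hQ : @ipoly K v (tp_minus sigma p lambda).
  rewrite /tp_minus; apply: (ipolyD hv).
    apply: (ipolyXn hv); apply: (ipolyD hv); first exact: (ipolyX hv).
    exact: (ipolyC hlam).
  have hs : integral v (sigma lambda) by rewrite hsl; exact: (integralXn hv p hlam).
  exact: (ipolyN hv (ipolyC hs)).
rewrite /F_coef; apply: (big_ind (fun x => vge v x (lbound p alpha beta l))).
- by left.
- by move=> x y; apply: (vge_add hv).
move=> [j hj] _ /=.
case: j hj => [|j] hj.
  by rewrite expr0 coef1; case: l hl {hj} => // l _; rewrite /= mulr0; left.
apply: (vge_mul hv); last exact: (ipolyXn hv).
have hjl : (j.+1 <= l)%N by [].
case: (hb j.+1 isT) => [->|h]; first by rewrite rmorph0; left.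
case: (boolP (b j.+1 == 0)%R) => [/eqP ->|hb0]; first by rewrite rmorph0; left.
right; rewrite hsig //.
have := lbound_mono p alpha beta j.+1 l pp ha isT hjl; lra.
Qed.
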